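(* Let $G$ be a simple graph with $m$ edges and $W$ wedges, let $\mathcal{S}$ be a fixed subset of the wedges of $G$, let $\mathcal{R}=(r_1,\dots,r_s)$ be $s$ independent uniformly random edges of $G$, and let $X$ be the number of index pairs $i<j$ with $\{r_i,r_j\}\in\mathcal{S}$. If $W\ge m$ and $s\ge m/\sqrt{W}$, then $\mathrm{Var}[X] \le 18\, s^3 W^{3/2}/m^3$.
   Context: A wedge is a path of length 2 in $G$, i.e. an unordered pair of distinct edges sharing exactly one vertex; $W$ denotes the total number of wedges of $G$. *)

(* Defs.v *)
From HB Require Import structures.
From mathcomp Require Import all_boot all_order all_algebra.
Set Implicit Arguments. Unset Strict Implicit. Unset Printing Implicit Defensive.
Import Order.TTheory GRing.Theory Num.Theory.

(* A simple graph on a finite vertex type V is a symmetric irreflexive rel. *)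

Definition edges (V : finType) (e : rel V) : {set {set V}} :=
  [set A | [exists x, exists y, e x y && (A == [set x; y])]].

Definition wedges (V : finType) (e : rel V) : {set {set {set V}}} :=
  [set P | [exists A in edges e, exists B in edges e,
     [&& A != B, #|A :&: B| == 1%N & P == [set A; B]]]].

(* Sample space: all s-tuples (r_1,...,r_s) of edges; uniform measure on it
   models s independent uniformly random edges. *)
Definition samples (V : finType) (e : rel V) (s : nat) : {set {ffun 'I_s -> {set V}}} :=
  [set r : {ffun 'I_s -> {set V}} | [forall i, r i \in edges e]].

Definition Xcount (V : finType) (s : nat) (S : {set {set {set V}}})
    (r : {ffun 'I_s -> {set V}}) : nat :=
  #|[set ij : 'I_s * 'I_s | (ij.1 < ij.2)%N && ([set r ij.1; r ij.2] \in S)]|.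

Definition expect (R : numFieldType) (V : finType) (e : rel V) (s : nat)
    (f : {ffun 'I_s -> {set V}} -> R) : R :=
  ((\sum_(r in samples e s) f r) / (#|samples e s|)%:R)%R.

Definition varX (R : numFieldType) (V : finType) (e : rel V) (s : nat)
    (S : {set {set {set V}}}) : R :=
  (expect e (fun r : {ffun 'I_s -> {set V}} => ((Xcount S r)%:R) ^+ 2)
   - (expect e (fun r : {ffun 'I_s -> {set V}} => (Xcount S r)%:R)) ^+ 2)%R.

(* Main.v *)
Require Import Defs.
From HB Require Import structures.
From mathcomp Require Import all_boot all_order all_algebra.
From mathcomp Require Import zify ring lra.
Import Order.TTheory GRing.Theory Num.Theory.
Lemma fiber (T : finType) (SS : {set {set T}}) :
  (#|[set p : T * T | [set p.1; p.2] \in SS]| <= 2 * #|SS|)%N.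
Proof.
set D := [set p : T * T | [set p.1; p.2] \in SS].
pose f (p : T * T) := ([set p.1; p.2], (enum_rank p.1 < enum_rank p.2)%N).
have inj : {in D &, injective f}.
  move=> [a b] [c d] _ _ [h hr] /=.
  have ha : a \in [set c; d] by rewrite -h set21.
  have hb : b \in [set c; d] by rewrite -h set22.
  have hc : c \in [set a; b] by rewrite h set21.
  have hd : d \in [set a; b] by rewrite h set22.
  move/set2P: ha => ha; move/set2P: hb => hb; move/set2P: hc => hc; move/set2P: hd => hd.
  case: ha => ?; case: hb => ?; case: hc => ?; case: hd => ?; subst => //.
  have : enum_rank c = enum_rank d by apply/val_inj => /=; move: hr; lia.
  by move/enum_rank_inj ->.
rewrite -(card_in_imset inj).
apply: (@leq_trans #|setX SS [set: bool]|).
  apply: subset_leq_card; apply/subsetP => x /imsetP[p]; rewrite inE => pD ->.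
  by rewrite inE /= pD inE.
by rewrite cardsX cardsT card_bool mulnC.
Qed.

Section Graph.
Variables (V : finType) (e : rel V).
Hypothesis esym : symmetric e.
Hypothesis eirr : irreflexive e.
Local Notation E := (edges e).

Lemma edgeP b : b \in E -> exists x y, [/\ e x y, x != y & b = [set x; y]].
Proof.
rewrite inE => /existsP[x /existsP[y /andP[exy /eqP ->]]].
exists x, y; split => //; apply/eqP => xy; subst; by rewrite eirr in exy.
Qed.

Arguments edgeP [b].
Lemma edge_card b : b \in E -> #|b| = 2.
Proof. by case/edgeP => x [y [_ nxy ->]]; rewrite cards2 nxy. Qed.

Lemma wedgeP b c : [set b; c] \in wedges e ->
  [/\ b \in E, c \in E, b != c & #|b :&: c| = 1].
Proof.
rewrite inE => /existsP[A /andP[AE /existsP[B /andP[BE /and3P[nAB /eqP cAB /eqP h]]]]].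
have hb : b \in [set A; B] by rewrite -h set21.
have hc : c \in [set A; B] by rewrite -h set22.
have hA : A \in [set b; c] by rewrite h set21.
have hB : B \in [set b; c] by rewrite h set22.
move/set2P: hb => hb; move/set2P: hc => hc; move/set2P: hA => hA; move/set2P: hB => hB.
case: hb => ?; case: hc => ?; case: hA => ?; case: hB => ?; subst; rewrite ?eqxx in nAB => //.
  all: by split; rewrite // 1?eq_sym // setIC.
Qed.

Arguments wedgeP [b c].
Lemma wedge_mk b c u : b \in E -> c \in E -> b != c -> u \in b -> u \in c ->
  [set b; c] \in wedges e.
Proof.
move=> bE cE nbc ub uc.
have h1 : (0 < #|b :&: c|)%N by apply/card_gt0P; exists u; rewrite inE ub uc.
have h2 : (#|b :&: c| <= 2)%N by rewrite -(edge_card _ bE) subset_leq_card // subsetIl.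
have h3 : #|b :&: c| != 2.
  apply/eqP => h.
  have : b :&: c == b by rewrite eqEcard subsetIl h (edge_card _ bE).
  move/eqP/setIidPl => sbc.
  have : b == c by rewrite eqEcard sbc (edge_card _ bE) (edge_card _ cE).
  by rewrite (negbTE nbc).
rewrite inE; apply/existsP; exists b; rewrite bE /=; apply/existsP; exists c.
rewrite cE nbc /= eqxx andbT; apply/eqP; lia.
Qed.

Arguments wedge_mk [b c u].
Lemma wedge_two b c u v : [set b; c] \in wedges e -> u != v ->
  u \in b -> u \in c -> v \in b -> v \in c -> False.
Proof.
case/wedgeP => _ _ _ h nuv ub uc vb vc.
have : (#|[set u; v]| <= #|b :&: c|)%N.
  by apply: subset_leq_card; apply/subsetP => w /set2P[]->; rewrite inE ?ub ?uc ?vb ?vc.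
by rewrite cards2 nuv h.
Qed.

Arguments wedge_two [b c u v].
Lemma dS_bound (S : {set {set {set V}}}) a : S \subset wedges e -> a \in E ->
  (#|[set b in E | [set a; b] \in S]| ^ 2 <= 4 * #|wedges e|)%N.
Proof.
move=> hS aE.
case: (edgeP aE) => u [v [_ nuv ha]].
pose Nu w := [set b in E | ([set a; b] \in S) && (w \in b)].
pose Pw w := [set p : {set V} * {set V} |
   ([set p.1; p.2] \in wedges e) && (w \in p.1) && (w \in p.2)].
pose Pall := [set p : {set V} * {set V} | [set p.1; p.2] \in wedges e].
have h1 : (#|[set b in E | [set a; b] \in S]| <= #|Nu u| + #|Nu v|)%N.
  apply: (@leq_trans #|Nu u :|: Nu v|); last by rewrite cardsU leq_subr.
  apply: subset_leq_card; apply/subsetP => b; rewrite inE => /andP[bE abS].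
  have /wedgeP[_ _ _ cab] := subsetP hS _ abS.
  have /card_gt0P[w] : (0 < #|a :&: b|)%N by rewrite cab.
  rewrite inE => /andP[wa wb]; move: wa; rewrite ha => /set2P[] ?; subst w.
    by rewrite in_setU; apply/orP; left; rewrite /Nu in_set bE abS wb.
  by rewrite in_setU; apply/orP; right; rewrite /Nu in_set bE abS wb.
have h2 w : w \in a -> (#|Nu w| ^ 2 <= #|Pw w|)%N.
  move=> wa.
  pose f (p : {set V} * {set V}) := if p.1 == p.2 then (a, p.1) else p.
  have aN : a \notin Nu w.
    rewrite /Nu in_set; apply/negP => /and3P[_ haa _].
    by have /wedgeP[_ _] := subsetP hS _ haa; rewrite eqxx.
  have inj : {in setX (Nu w) (Nu w) &, injective f}.
    move=> [b c] [b' c']; rewrite !in_setX /= => /andP[hb hc] /andP[hb' hc'].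
    rewrite /f /=; case: eqP => [->|nbc]; case: eqP => [->|nbc'] //.
    - by case=> ->.
    - by case=> h _; subst b'; rewrite hb' in aN.
    - by case=> h _; subst b; rewrite hb in aN.
  rewrite expnS expn1 -cardsX -(card_in_imset inj).
  apply: subset_leq_card; apply/subsetP => q /imsetP[[b c]].
  rewrite in_setX /= => /andP[hb hc] ->.
  move: hb; rewrite /Nu in_set => /and3P[bE abS wb].
  move: hc; rewrite /Nu in_set => /and3P[cE acS wc].
  rewrite /f /Pw /=; have [ebc|nbc] := eqVneq b c; rewrite in_set /=.
    by rewrite (subsetP hS _ abS) wa wb.
  by rewrite (wedge_mk bE cE nbc wb wc) wb wc.
have h3 : (#|Pw u| + #|Pw v| <= #|Pall|)%N.
  have d0 : Pw u :&: Pw v = set0.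
    apply/setP => p; rewrite in_setI in_set0 [p \in Pw u]in_set [p \in Pw v]in_set; apply/negP.
    move=> /andP[/andP[/andP[hw u1] u2] /andP[/andP[_ v1] v2]].
    exact: (wedge_two hw nuv u1 u2 v1 v2).
  have := cardsU (Pw u) (Pw v); rewrite d0 cards0 subn0 => <-.
  apply: subset_leq_card; apply/subsetP => p.
  rewrite in_setU [p \in Pw u]in_set [p \in Pw v]in_set [p \in Pall]in_set.
  by case/orP => /andP[/andP[->]].
have h4 : (#|Pall| <= 2 * #|wedges e|)%N by apply: fiber.
have hu : u \in a by rewrite ha set21.
have hv : v \in a by rewrite ha set22.
have := h2 _ hu; have := h2 _ hv.
have h5 := leq_mul h1 h1.
move: h1 h3 h4 h5.
set d := #|[set b in E | [set a; b] \in S]|.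
set x := #|Nu u|; set y := #|Nu v|.
rewrite !expnS !expn0 !muln1.
move=> *; have h6 : (2 * (x * y) <= x * x + y * y)%N.
  by have [hxy|hxy] := leqP x y; [rewrite -(subnKC hxy) | rewrite -(subnKC (ltnW hxy))]; nia.
nia.
Qed.

End Graph.

Local Open Scope ring_scope.
Section Prob.
Variable R : rcfType.
Variables (V : finType) (e : rel V) (s : nat).
Local Notation E := (edges e).
Local Notation Om := (samples e s).
Local Notation m := #|edges e|.
Hypothesis m_gt0 : (0 < m)%N.

Lemma inOm r : (r \in Om) = [forall i, r i \in E].
Proof. by rewrite inE. Qed.

Lemma size_uniq_le (T : seq 'I_s) : uniq T -> (size T <= s)%N.
Proof. by move/card_uniqP <-; rewrite -[X in (_ <= X)%N]card_ord max_card. Qed.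

Lemma marg (T : seq 'I_s) (g : 'I_s -> {set V}) :
  uniq T -> (forall t, t \in T -> g t \in E) ->
  \sum_(r in Om) \prod_(t <- T) (((r t) == g t)%:R : R)
   = (m ^ s)%:R / (m%:R ^+ size T).
Proof.
move=> uT gE.
transitivity (\prod_(t : 'I_s) \sum_(x in E) (if t \in T then ((x == g t)%:R : R) else 1)).
  rewrite bigA_distr_big; apply: eq_big => [r|r _].
    by rewrite inE; apply/forallP/familyP => H x; exact: H.
  by rewrite big_uniq // big_mkcond.
transitivity (\prod_(t : 'I_s) (if t \notin T then (m%:R : R) else 1)).
  apply: eq_bigr => t _; case tT: (t \in T) => /=.
    rewrite (bigD1 (g t)) ?gE //= eqxx big1 ?addr0 // => x /andP[_ /negbTE ->] //.
  by rewrite sumr_const.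
rewrite -big_mkcond prodr_const.
have hc : #|[pred t : 'I_s | t \notin T]| = (s - size T)%N.
  have h1 : (#|T| + #|[predC T]| = s)%N by rewrite cardC card_ord.
  have h2 : #|T| = size T by apply/card_uniqP.
  transitivity #|[predC T]|; first by apply: eq_card.
  lia.
rewrite hc -natrX.
have hs := @size_uniq_le T uT.
have m0 : (m%:R : R) ^+ size T != 0 by rewrite expf_neq0 // pnatr_eq0 -lt0n.
apply: (mulIf m0); rewrite mulfVK // -natrX -natrM -expnD subnK //.
Qed.

Lemma expand1 (F : {set V} -> R) x : x \in E ->
  F x = \sum_(a in E) F a * (x == a)%:R.
Proof.
move=> xE; rewrite (bigD1 x) //= eqxx mulr1 big1 ?addr0 // => a /andP[_ ax].
by rewrite eq_sym (negbTE ax) mulr0.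
Qed.

Local Notation N := ((m ^ s)%:R : R).

Lemma marg2 (i j : 'I_s) (F : {set V} -> {set V} -> R) : i != j ->
  \sum_(r in Om) F (r i) (r j) = N / m%:R ^+ 2 * \sum_(a in E) \sum_(b in E) F a b.
Proof.
move=> nij.
transitivity (\sum_(r in Om) \sum_(a in E) \sum_(b in E) (F a b *
   \prod_(t <- [:: i; j]) ((r t == (if t == i then a else b))%:R : R))).
  apply: eq_bigr => r; rewrite inOm => /forallP rE.
  rewrite (@expand1 (fun x => F x (r j)) _ (rE i)); apply: eq_bigr => a _.
  rewrite (@expand1 (F a) _ (rE j)) mulr_suml; apply: eq_bigr => b _.
  by rewrite !big_cons big_nil eqxx [j == i]eq_sym (negbTE nij) mulr1 mulrAC mulrA.
rewrite exchange_big mulr_sumr; apply: eq_bigr => a aE.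
rewrite exchange_big mulr_sumr; apply: eq_bigr => b bE.
rewrite -mulr_sumr marg /=; first by rewrite mulrC.
  by rewrite /= in_cons in_nil orbF nij.
by move=> t; rewrite !in_cons in_nil orbF => /orP[]/eqP->; rewrite ?eqxx // [j == i]eq_sym (negbTE nij).
Qed.

Lemma marg3 (i j k : 'I_s) (F : {set V} -> {set V} -> {set V} -> R) :
  i != j -> i != k -> j != k ->
  \sum_(r in Om) F (r i) (r j) (r k) =
    N / m%:R ^+ 3 * \sum_(a in E) \sum_(b in E) \sum_(c in E) F a b c.
Proof.
move=> nij nik njk.
transitivity (\sum_(r in Om) \sum_(a in E) \sum_(b in E) \sum_(c in E) (F a b c *
   \prod_(t <- [:: i; j; k]) ((r t == (if t == i then a else if t == j then b else c))%:R : R))).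
  apply: eq_bigr => r; rewrite inOm => /forallP rE.
  rewrite (@expand1 (fun x => F x (r j) (r k)) _ (rE i)); apply: eq_bigr => a _.
  rewrite (@expand1 (fun x => F a x (r k)) _ (rE j)) mulr_suml; apply: eq_bigr => b _.
  rewrite (@expand1 (F a b) _ (rE k)) !mulr_suml; apply: eq_bigr => c _.
  rewrite !big_cons big_nil eqxx [j == i]eq_sym (negbTE nij) eqxx.
  rewrite [k == i]eq_sym (negbTE nik) [k == j]eq_sym (negbTE njk) ?eqxx.
  by rewrite mulr1; ring.
rewrite exchange_big mulr_sumr; apply: eq_bigr => a aE.
rewrite exchange_big mulr_sumr; apply: eq_bigr => b bE.
rewrite exchange_big mulr_sumr; apply: eq_bigr => c cE.
rewrite -mulr_sumr marg /=; first by rewrite mulrC.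
  by rewrite /= !in_cons !in_nil !orbF !negb_or nij nik njk.
move=> t; rewrite !in_cons in_nil orbF => /orP[/eqP->|/orP[]/eqP->]; rewrite ?eqxx //.
  by rewrite [j == i]eq_sym (negbTE nij).
by rewrite [k == i]eq_sym (negbTE nik) [k == j]eq_sym (negbTE njk).
Qed.

Lemma marg4 (i j k l : 'I_s) (F : {set V} -> {set V} -> {set V} -> {set V} -> R) :
  i != j -> i != k -> i != l -> j != k -> j != l -> k != l ->
  \sum_(r in Om) F (r i) (r j) (r k) (r l) =
    N / m%:R ^+ 4 * \sum_(a in E) \sum_(b in E) \sum_(c in E) \sum_(d in E) F a b c d.
Proof.
move=> nij nik nil njk njl nkl.
transitivity (\sum_(r in Om) \sum_(a in E) \sum_(b in E) \sum_(c in E) \sum_(d in E) (F a b c d *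
   \prod_(t <- [:: i; j; k; l]) ((r t == (if t == i then a else if t == j then b
      else if t == k then c else d))%:R : R))).
  apply: eq_bigr => r; rewrite inOm => /forallP rE.
  rewrite (@expand1 (fun x => F x (r j) (r k) (r l)) _ (rE i)); apply: eq_bigr => a _.
  rewrite (@expand1 (fun x => F a x (r k) (r l)) _ (rE j)) mulr_suml; apply: eq_bigr => b _.
  rewrite (@expand1 (fun x => F a b x (r l)) _ (rE k)) !mulr_suml; apply: eq_bigr => c _.
  rewrite (@expand1 (F a b c) _ (rE l)) !mulr_suml; apply: eq_bigr => d _.
  rewrite !big_cons big_nil eqxx [j == i]eq_sym (negbTE nij) eqxx.
  rewrite [k == i]eq_sym (negbTE nik) [k == j]eq_sym (negbTE njk) ?eqxx.
  rewrite [l == i]eq_sym (negbTE nil) [l == j]eq_sym (negbTE njl).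
  rewrite [l == k]eq_sym (negbTE nkl) ?eqxx.
  by rewrite mulr1; ring.
rewrite exchange_big mulr_sumr; apply: eq_bigr => a aE.
rewrite exchange_big mulr_sumr; apply: eq_bigr => b bE.
rewrite exchange_big mulr_sumr; apply: eq_bigr => c cE.
rewrite exchange_big mulr_sumr; apply: eq_bigr => d dE.
rewrite -mulr_sumr marg /=; first by rewrite mulrC.
  by rewrite /= !in_cons !in_nil !orbF !negb_or nij nik nil njk njl nkl.
move=> t; rewrite !in_cons in_nil orbF => /orP[/eqP->|/orP[/eqP->|/orP[]/eqP->]]; rewrite ?eqxx //.
  by rewrite [j == i]eq_sym (negbTE nij).
  by rewrite [k == i]eq_sym (negbTE nik) [k == j]eq_sym (negbTE njk).
by rewrite [l == i]eq_sym (negbTE nil) [l == j]eq_sym (negbTE njl) [l == k]eq_sym (negbTE nkl).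
Qed.


Variable S : {set {set {set V}}}.
Definition y (a b : {set V}) : R := ([set a; b] \in S)%:R.
Definition Qs := \sum_(a in E) \sum_(b in E) y a b.
Definition D2 := \sum_(a in E) (\sum_(b in E) y a b) ^+ 2.

Lemma ysym a b : y a b = y b a.
Proof. by rewrite /y setUC. Qed.
Lemma yge0 a b : 0 <= y a b.
Proof. by rewrite /y ler0n. Qed.
Lemma yy a b : y a b * y a b = y a b.
Proof. by rewrite /y; case: ([set a; b] \in S); rewrite ?mulr1 ?mulr0. Qed.
Lemma Qs_ge0 : 0 <= Qs.
Proof. by apply: sumr_ge0 => a _; apply: sumr_ge0 => b _; apply: yge0. Qed.
Lemma D2_ge0 : 0 <= D2.
Proof. by apply: sumr_ge0 => a _; apply: sqr_ge0. Qed.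
Lemma N_gt0 : 0 < N.
Proof. by rewrite ltr0n expn_gt0 m_gt0. Qed.
Lemma m_neq0 : (m%:R : R) != 0.
Proof. by rewrite pnatr_eq0 -lt0n. Qed.

Lemma SmY (i j : 'I_s) : i != j ->
  \sum_(r in Om) y (r i) (r j) = N / m%:R ^+ 2 * Qs.
Proof. exact: marg2. Qed.

Lemma SmYY (i j : 'I_s) : i != j ->
  \sum_(r in Om) y (r i) (r j) * y (r i) (r j) = N / m%:R ^+ 2 * Qs.
Proof. by move=> h; rewrite -(@SmY i j h); apply: eq_bigr => r _; rewrite yy. Qed.

Lemma SmY3 (i j k : 'I_s) : i != j -> i != k -> j != k ->
  \sum_(r in Om) y (r i) (r j) * y (r i) (r k) = N / m%:R ^+ 3 * D2.
Proof.
move=> h1 h2 h3; rewrite (@marg3 i j k (fun a b c => y a b * y a c)) //.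
congr (_ * _); apply: eq_bigr => a _.
by rewrite expr2 mulr_suml; apply: eq_bigr => b _; rewrite mulr_sumr.
Qed.

Lemma SmY4 (i j k l : 'I_s) : i != j -> i != k -> i != l -> j != k -> j != l -> k != l ->
  \sum_(r in Om) y (r i) (r j) * y (r k) (r l) = N / m%:R ^+ 4 * Qs ^+ 2.
Proof.
move=> h1 h2 h3 h4 h5 h6; rewrite (@marg4 i j k l (fun a b c d => y a b * y c d)) //.
congr (_ * _); rewrite expr2 /Qs mulr_suml; apply: eq_bigr => a _.
rewrite mulr_suml; apply: eq_bigr => b _; rewrite mulr_sumr; apply: eq_bigr => c _.
by rewrite mulr_sumr.
Qed.

Lemma aux (c A B : R) (b0 b1 b2 b3 b4 : bool) : 0 <= A -> 0 <= B -> c <= B ->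
  b1 || b2 || b3 || b4 ->
  c <= b0%:R * A + (b1%:R + b2%:R + b3%:R + b4%:R) * B.
Proof.
by case: b0; case: b1; case: b2; case: b3; case: b4 => //= *; rewrite ?mulr1n ?mulr0n; nra.
Qed.

Lemma aux0 (c A B : R) (b0 b1 b2 b3 b4 : bool) : 0 <= A -> 0 <= B -> c <= A -> b0 ->
  c <= b0%:R * A + (b1%:R + b2%:R + b3%:R + b4%:R) * B.
Proof.
by case: b0; case: b1; case: b2; case: b3; case: b4 => //= *; rewrite ?mulr1n ?mulr0n; nra.
Qed.

Lemma ltn_neq (i j : 'I_s) : (i < j)%N -> i != j.
Proof. by move=> h; apply/eqP => E0; rewrite E0 ltnn in h. Qed.

Definition cc (i j k l : 'I_s) : R :=
  (\sum_(r in Om) y (r i) (r j) * y (r k) (r l)) / N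
  - (\sum_(r in Om) y (r i) (r j)) * (\sum_(r in Om) y (r k) (r l)) / N ^+ 2.

Lemma cc_le1 i j k l : cc i j k l <= (\sum_(r in Om) y (r i) (r j) * y (r k) (r l)) / N.
Proof.
rewrite /cc lerBlDr lerDl; apply: divr_ge0; last by apply: exprn_ge0; apply: ltW; apply: N_gt0.
by apply: mulr_ge0; apply: sumr_ge0 => r _; apply: yge0.
Qed.

Lemma term (i j k l : 'I_s) : (i < j)%N -> (k < l)%N ->
  cc i j k l <= ((i == k) && (j == l))%:R * (Qs / m%:R ^+ 2)
     + ((i == k)%:R + (i == l)%:R + (j == k)%:R + (j == l)%:R) * (D2 / m%:R ^+ 3).
Proof.
move=> hij hkl.
have N0 : N != 0 by rewrite gt_eqF // N_gt0.
have m0 := m_neq0.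
have A0 : 0 <= Qs / m%:R ^+ 2 by rewrite divr_ge0 ?exprn_ge0 ?ler0n ?Qs_ge0.
have B0 : 0 <= D2 / m%:R ^+ 3 by rewrite divr_ge0 ?exprn_ge0 ?ler0n ?D2_ge0.
have hN X n : N / m%:R ^+ n * X / N = X / m%:R ^+ n.
  by field; rewrite N0 expf_neq0.
have nij := @ltn_neq i j hij; have nkl := @ltn_neq k l hkl.
have [eqik|neik] := eqVneq i k.
  subst k; have [eqjl|nejl] := eqVneq j l.
    subst l; apply: aux0 => //.
    by apply: le_trans (cc_le1 _ _ _ _) _; rewrite (SmYY _ _ nij) hN.
  apply: aux; rewrite ?orbT //.
  by apply: le_trans (cc_le1 _ _ _ _) _; rewrite (SmY3 _ _ _ nij nkl nejl) hN.
have [eqil|neil] := eqVneq i l.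
  subst l; apply: aux; rewrite ?orbT //.
  apply: le_trans (cc_le1 _ _ _ _) _.
  under eq_bigr do rewrite [y (_ k) _]ysym.
  have h3 : j != k by rewrite eq_sym ltn_neq // (ltn_trans hkl hij).
  by rewrite (SmY3 _ _ _ nij neik h3) hN.
have [eqjk|nejk] := eqVneq j k.
  subst k; apply: aux; rewrite ?orbT //.
  apply: le_trans (cc_le1 _ _ _ _) _.
  under eq_bigr do rewrite [y _ (_ j)]ysym.
  have h1 : j != i by rewrite eq_sym.
  by rewrite (SmY3 _ _ _ h1 nkl neil) hN.
have [eqjl|nejl] := eqVneq j l.
  subst l; apply: aux; rewrite ?orbT //.
  apply: le_trans (cc_le1 _ _ _ _) _.
  under eq_bigr do rewrite [y (_ i) _]ysym [y (_ k) _]ysym.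
  have h1 : j != i by rewrite eq_sym.
  have h2 : j != k by rewrite eq_sym.
  by rewrite (SmY3 _ _ _ h1 h2 neik) hN.
have -> : cc i j k l = 0.
  rewrite /cc (SmY4 _ _ _ _ nij neik neil nejk nejl nkl) (SmY _ _ nij) (SmY _ _ nkl).
  have hs : (4 <= s)%N.
    move: neik neil nejk nejl; rewrite -!val_eqE /=.
    have := ltn_ord l; have := ltn_ord j; lia.
  have -> : N = (m ^ (s - 4))%:R * m%:R ^+ 4.
    by rewrite -natrX -natrM -expnD subnK.
  by field; rewrite m0 /= pnatr_eq0 expn_eq0 negb_and -lt0n m_gt0.
by apply: addr_ge0; apply: mulr_ge0 => //; rewrite !mulr0n !addr0.
Qed.


Definition Xr (r : {ffun 'I_s -> {set V}}) :=
  \sum_(P : 'I_s * 'I_s | (P.1 < P.2)%N) y (r P.1) (r P.2).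

Lemma Xcount_eq r : ((Xcount S r)%:R : R) = Xr r.
Proof.
rewrite /Xcount /Xr -sum1_card natr_sum big_mkcond [RHS]big_mkcond /=.
apply: eq_bigr => P _; rewrite inE /y.
by case: (P.1 < P.2)%N => //=; case: ([set r P.1; r P.2] \in S).
Qed.

Lemma card_Om : (#|Om|%:R : R) = N.
Proof.
have h := @marg [::] (fun _ => set0) isT (fun t (ht : t \in [::]) => ltac:(by [])).
rewrite /= expr0 divr1 in h; rewrite -h.
by under eq_bigr do rewrite big_nil; rewrite sumr_const.
Qed.

Definition SmP (P : 'I_s * 'I_s) := \sum_(r in Om) y (r P.1) (r P.2).
Definition SmPQ (P Q : 'I_s * 'I_s) :=
  \sum_(r in Om) y (r P.1) (r P.2) * y (r Q.1) (r Q.2).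

Lemma var_eq : varX R e s S =
  \sum_(P : 'I_s * 'I_s | (P.1 < P.2)%N) \sum_(Q : 'I_s * 'I_s | (Q.1 < Q.2)%N) cc P.1 P.2 Q.1 Q.2.
Proof.
rewrite /varX /expect card_Om.
under eq_bigr do rewrite Xcount_eq.
under [X in _ - (X / _) ^+ 2]eq_bigr do rewrite Xcount_eq.
have h1 : \sum_(r in Om) Xr r ^+ 2 =
   \sum_(P : 'I_s * 'I_s | (P.1 < P.2)%N) \sum_(Q : 'I_s * 'I_s | (Q.1 < Q.2)%N) SmPQ P Q.
  transitivity (\sum_(r in Om) \sum_(P : 'I_s * 'I_s | (P.1 < P.2)%N) \sum_(Q : 'I_s * 'I_s | (Q.1 < Q.2)%N)
     y (r P.1) (r P.2) * y (r Q.1) (r Q.2)).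
    apply: eq_bigr => r _; rewrite expr2 /Xr mulr_suml; apply: eq_bigr => P _.
    by rewrite mulr_sumr.
  rewrite exchange_big; apply: eq_bigr => P _.
  by rewrite exchange_big.
have h2 : \sum_(r in Om) Xr r = \sum_(P : 'I_s * 'I_s | (P.1 < P.2)%N) SmP P.
  by rewrite exchange_big.
rewrite h1 h2.
have N0 : N != 0 by rewrite gt_eqF // N_gt0.
have -> : ((\sum_(P : 'I_s * 'I_s | (P.1 < P.2)%N) SmP P) / N) ^+ 2 =
  \sum_(P : 'I_s * 'I_s | (P.1 < P.2)%N) \sum_(Q : 'I_s * 'I_s | (Q.1 < Q.2)%N) SmP P * SmP Q / N ^+ 2.
  set T := \sum_(P : 'I_s * 'I_s | (P.1 < P.2)%N) SmP P.
  transitivity (\sum_(P : 'I_s * 'I_s | (P.1 < P.2)%N) SmP P * T / N ^+ 2).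
    by rewrite -mulr_suml -mulr_suml -/T expr_div_n expr2.
  apply: eq_bigr => P _; rewrite /T mulr_sumr mulr_suml.
  by apply: eq_bigr.
rewrite mulr_suml -sumrB; apply: eq_bigr => P _.
by rewrite mulr_suml -sumrB; apply: eq_bigr => Q _.
Qed.

Lemma sum_sub (I : finType) (P : pred I) (f : I -> R) :
  (forall i, 0 <= f i) -> \sum_(i | P i) f i <= \sum_i f i.
Proof.
move=> h; rewrite [X in _ <= X](bigID P) /= lerDl.
by apply: sumr_ge0 => i _.
Qed.

Lemma ind1 (i : 'I_s) : \sum_(Q : 'I_s * 'I_s) ((i == Q.1)%:R : R) = s%:R.
Proof.
transitivity (\sum_(q1 : 'I_s) \sum_(q2 : 'I_s) ((i == q1)%:R : R)).
  by rewrite pair_bigA.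
under eq_bigr do rewrite sumr_const card_ord.
rewrite sumrMnl (bigD1 i) //= eqxx big1 ?addr0 // => q nq.
by rewrite eq_sym (negbTE nq).
Qed.

Lemma ind2 (i : 'I_s) : \sum_(Q : 'I_s * 'I_s) ((i == Q.2)%:R : R) = s%:R.
Proof.
transitivity (\sum_(q1 : 'I_s) \sum_(q2 : 'I_s) ((i == q2)%:R : R)).
  by rewrite pair_bigA.
have h : \sum_(q2 : 'I_s) ((i == q2)%:R : R) = 1.
  rewrite (bigD1 i) //= eqxx big1 ?addr0 // => q nq.
  by rewrite eq_sym (negbTE nq).
under eq_bigr do rewrite h.
by rewrite sumr_const card_ord.
Qed.

Lemma ind0 (P : 'I_s * 'I_s) :
  \sum_(Q : 'I_s * 'I_s) (((P.1 == Q.1) && (P.2 == Q.2))%:R : R) = 1.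
Proof.
rewrite (bigD1 P) //= !eqxx big1 ?addr0 // => Q nQ.
by rewrite -xpair_eqE -!surjective_pairing eq_sym (negbTE nQ).
Qed.

Lemma var_le : varX R e s S <=
  (s%:R ^+ 2) * (Qs / m%:R ^+ 2) + 4 * s%:R ^+ 3 * (D2 / m%:R ^+ 3).
Proof.
set A := Qs / m%:R ^+ 2; set B := D2 / m%:R ^+ 3.
have A0 : 0 <= A by rewrite divr_ge0 ?exprn_ge0 ?ler0n ?Qs_ge0.
have B0 : 0 <= B by rewrite divr_ge0 ?exprn_ge0 ?ler0n ?D2_ge0.
pose b (P Q : 'I_s * 'I_s) := ((P.1 == Q.1) && (P.2 == Q.2))%:R * A
   + ((P.1 == Q.1)%:R + (P.1 == Q.2)%:R + (P.2 == Q.1)%:R + (P.2 == Q.2)%:R) * B.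
have b0 P Q : 0 <= b P Q.
  by rewrite /b addr_ge0 // mulr_ge0 // ?ler0n // !addr_ge0 // ler0n.
rewrite var_eq.
apply: (@le_trans _ _ (\sum_(P : 'I_s * 'I_s | (P.1 < P.2)%N) \sum_(Q : 'I_s * 'I_s | (Q.1 < Q.2)%N) b P Q)).
  apply: ler_sum => P hP; apply: ler_sum => Q hQ; exact: term.
apply: (@le_trans _ _ (\sum_P \sum_Q b P Q)).
  apply: (@le_trans _ _ (\sum_(P : 'I_s * 'I_s | (P.1 < P.2)%N) \sum_Q b P Q)).
    by apply: ler_sum => P _; apply: sum_sub.
  by apply: sum_sub => P; apply: sumr_ge0.
have hb P : \sum_Q b P Q = A + 4 * s%:R * B.
  rewrite /b big_split /= -mulr_suml ind0 mul1r -mulr_suml.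
  rewrite !big_split /= !ind1 !ind2; congr (_ + _ * _).
  by ring.
under eq_bigr do rewrite hb.
rewrite sumr_const card_prod card_ord.
have -> : forall x : R, x *+ (s * s) = x * (s%:R * s%:R) by move=> x; rewrite -natrM mulr_natr.
by rewrite le_eqVlt; apply/orP; left; apply/eqP; ring.
Qed.

End Prob.

Section Final.
Variable R : rcfType.
Variables (V : finType) (e : rel V).
Hypothesis esym : symmetric e.
Hypothesis eirr : irreflexive e.
Variable S : {set {set {set V}}}.
Hypothesis hS : S \subset wedges e.
Local Notation E := (edges e).

Lemma row_sum a : \sum_(b in E) y R V S a b = (#|[set b in E | [set a; b] \in S]|)%:R.
Proof.
rewrite -sum1_card natr_sum big_mkcond [RHS]big_mkcond /=.
have hm b : (b \in [set b0 in E | [set a; b0] \in S]) = (b \in E) && ([set a; b] \in S).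
  by rewrite in_set.
apply: eq_bigr => b _; rewrite hm /y.
by case: (b \in E); case: ([set a; b] \in S).
Qed.

Lemma Qs_le : Qs R V e S <= 2 * (#|wedges e|)%:R.
Proof.
rewrite /Qs pair_big /=.
apply: le_trans (@sum_sub R _ _ (fun p => y R V S p.1 p.2) (fun p => yge0 R V S p.1 p.2)) _.
have -> : \sum_(p : {set V} * {set V}) y R V S p.1 p.2
    = (#|[set p : {set V} * {set V} | [set p.1; p.2] \in S]|)%:R.
  rewrite -sum1_card natr_sum /=.
  rewrite [RHS]big_mkcond; apply: eq_bigr => p _; rewrite in_set /y.
  by case: ([set p.1; p.2] \in S).
rewrite -natrM ler_nat.
apply: leq_trans (fiber _ S) _; rewrite leq_mul2l /=.
exact: subset_leq_card.
Qed.

Lemma D2_le : D2 R V e S <= 4 * (#|wedges e|)%:R * Num.sqrt ((#|wedges e|)%:R).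
Proof.
set W := (#|wedges e|)%:R : R.
set q := Num.sqrt W.
have W0 : 0 <= W by rewrite ler0n.
have q0 : 0 <= q by rewrite sqrtr_ge0.
have qq : q ^+ 2 = W by rewrite sqr_sqrtr.
have hd a : a \in E -> \sum_(b in E) y R V S a b <= 2 * q.
  move=> aE; rewrite row_sum.
  have h := @dS_bound V e eirr S a hS aE.
  set d := #|_| in h *.
  have hR : (d%:R : R) ^+ 2 <= 4 * W.
    by rewrite -natrX /W -[4]/(4%:R) -natrM ler_nat.
  have d0 : (0 : R) <= d%:R by rewrite ler0n.
  nra.
apply: (@le_trans _ _ (\sum_(a in E) (2 * q) * \sum_(b in E) y R V S a b)).
  apply: ler_sum => a aE; rewrite expr2; apply: ler_wpM2r; last exact: hd.
  by apply: sumr_ge0 => b _; apply: yge0.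
rewrite -mulr_sumr.
have := Qs_le; rewrite -/W /Qs => hQ.
have hQ0 : 0 <= \sum_(i in E) \sum_(b in E) y R V S i b.
  by apply: sumr_ge0 => a _; apply: sumr_ge0 => b _; apply: yge0.
nra.
Qed.

End Final.

Theorem mainTheorem3 (R : rcfType) (V : finType) (e : rel V)
    (S : {set {set {set V}}}) (s : nat) :
  symmetric e -> irreflexive e ->
  S \subset wedges e ->
  (#|edges e| <= #|wedges e|)%N ->
  (#|edges e|)%:R / Num.sqrt ((#|wedges e|)%:R) <= (s%:R : R) ->
  varX R e s S <=
    18 * s%:R ^+ 3 * ((#|wedges e|)%:R * Num.sqrt ((#|wedges e|)%:R))
       / (#|edges e|)%:R ^+ 3.
Proof.
move=> esym eirr hS hmW hs.
have [m0|mpos] := posnP #|edges e|.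
  have X0 r : r \in samples e s -> Xcount S r = 0%N.
    move=> rOm; apply/eqP; rewrite cards_eq0; apply/eqP/setP => ij.
    rewrite in_set0; apply/negP => _.
    move: rOm; rewrite in_set => /forallP /(_ ij.1).
    by rewrite (cards0_eq m0) in_set0.
  rewrite m0 expr0n /= invr0 mulr0 /varX /expect.
  rewrite big1 ?mul0r; last by move=> r /X0 ->; rewrite expr0n.
  rewrite big1 ?mul0r; last by move=> r /X0 ->.
  by rewrite expr0n /= subr0.
apply: le_trans (@var_le R V e s mpos S) _.
set W := (#|wedges e|)%:R : R.
set q := Num.sqrt W.
set M := (#|edges e|)%:R : R.
have M0 : 0 < M by rewrite ltr0n.
have W0 : 0 < W by rewrite ltr0n (leq_trans mpos hmW).
have q0 : 0 < q by rewrite sqrtr_gt0.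
have qq : q ^+ 2 = W by rewrite sqr_sqrtr // ltW.
have hQ := @Qs_le R V e S hS; rewrite -/W in hQ.
have hD := @D2_le R V e eirr S hS; rewrite -/W -/q in hD.
have hQ0 := Qs_ge0 R V e S.
have hD0 := D2_ge0 R V e S.
have hMs : M <= s%:R * q by rewrite -ler_pdivrMr.
have s0 : (0 : R) <= s%:R by rewrite ler0n.
set Q := Qs R V e S in hQ hQ0 *; set D := D2 R V e S in hD hD0 *.
have -> : s%:R ^+ 2 * (Q / M ^+ 2) + 4 * s%:R ^+ 3 * (D / M ^+ 3)
   = (s%:R ^+ 2 * Q * M + 4 * s%:R ^+ 3 * D) / M ^+ 3.
  by field; rewrite gt_eqF.
apply: ler_wpM2r; first by rewrite invr_ge0 exprn_ge0 // ltW.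
have h1 : Q * M <= (2 * W) * (s%:R * q).
  by apply: ler_pM => //; exact: ltW.
have h2 : s%:R ^+ 2 * (Q * M) <= s%:R ^+ 2 * ((2 * W) * (s%:R * q)).
  by apply: ler_wpM2l => //; exact: exprn_ge0.
have h3 : 4 * s%:R ^+ 3 * D <= 4 * s%:R ^+ 3 * (4 * W * q).
  by apply: ler_wpM2l => //; rewrite mulr_ge0 // exprn_ge0.
rewrite -[s%:R ^+ 2 * Q * M]mulrA; apply: le_trans (lerD h2 h3) _.
by rewrite le_eqVlt; apply/orP; left; apply/eqP; ring.
Qed.
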